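(* Every $2$-transitive affine permutation group of degree at least $3$ contains a quasi-semiregular element.
   Context: An affine permutation group is a subgroup $G=VG_0\le\mathrm{AGL}(d,q)$ containing the translation group $V=\mathbb F_q^d$, acting on $V$. A permutation $g$ is quasi-semiregular if $\langle g\rangle$ has a unique fixed point and acts semiregularly (only the identity fixes a point) on the remaining points. *)

(* Defs.v *)
From mathcomp Require Import all_boot all_order all_algebra all_fingroup all_solvable all_field.
Set Implicit Arguments. Unset Strict Implicit. Unset Printing Implicit Defensive.
Import GRing.Theory.
Local Open Scope ring_scope.

Definition translations (F : finFieldType) (d : nat) : {set {perm 'rV[F]_d}} :=
  [set p : {perm 'rV[F]_d} | [exists v : 'rV[F]_d, [forall x, p x == x + v]]].

Definition AGL (F : finFieldType) (d : nat) : {set {perm 'rV[F]_d}} :=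
  [set p : {perm 'rV[F]_d} | [exists A : 'M[F]_d, exists v : 'rV[F]_d,
      (A \in unitmx) && [forall x, p x == x *m A + v]]].

Definition affine_perm_group (F : finFieldType) (d : nat)
    (G : {group {perm 'rV[F]_d}}) : Prop :=
  translations F d \subset G /\ G \subset AGL F d.

Definition quasi_semiregular (T : finType) (g : {perm T}) : Prop :=
  exists x : T,
    (forall y : T, (forall h, h \in <[g]>%g -> h y = y) <-> y = x) /\
    (forall y : T, y != x -> forall h, h \in <[g]>%g -> h y = y -> h = 1%g).

(* Main.v *)
Require Import Defs.
From mathcomp Require Import all_boot all_order all_algebra all_fingroup all_solvable all_field.
From mathcomp Require Import mxabelem ring zify.
Set Implicit Arguments. Unset Strict Implicit. Unset Printing Implicit Defensive.

Section NumberTheory.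
Import Order.TTheory GRing.Theory Num.Theory.
Local Open Scope ring_scope.
Lemma Phi_split (d g : nat) : (0 < d)%N -> (g %| d)%N -> (g < d)%N ->
  exists B : {poly int}, 'X^d - 1 = ('X^g - 1) * ('Phi_d * B).
Proof.
move=> d0 gd gltd.
have g0 : (0 < g)%N by case: g gd gltd => //; rewrite dvd0n => /eqP ->.
rewrite -(prod_Cyclotomic d0) (bigID (fun e => e %| g)%N) /=.
have -> : \prod_(e <- divisors d | (e %| g)%N) 'Phi_e = 'X^g - 1.
  rewrite -(prod_Cyclotomic g0) -big_filter; apply: perm_big.
  apply: uniq_perm; first by rewrite filter_uniq ?divisors_uniq.
    exact: divisors_uniq.
  move=> e; rewrite mem_filter -!dvdn_divisors //.
  apply/andP/idP => [[]//|eg]; split=> //; exact: dvdn_trans eg gd.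
rewrite (big_rem d) /=; last by rewrite -dvdn_divisors.
by rewrite gtnNdvd //; eexists.
Qed.

Lemma Phi_dvd (d : nat) : (0 < d)%N ->
  exists B : {poly int}, 'X^d - 1 = 'Phi_d * B.
Proof.
move=> d0; rewrite -(prod_Cyclotomic d0) (bigD1_seq d) /=.
- by eexists.
- by rewrite -dvdn_divisors.
- exact: divisors_uniq.
Qed.
Lemma factor_gt1 (q : nat) (w : algC) : (2 <= q)%N -> w^* * w = 1 ->
  (w != 1) || (3 <= q)%N -> 1 < `|q%:R - w|.
Proof.
move=> q2 ww h.
have key : `|q%:R - w| ^+ 2 = (q%:R - 1) ^+ 2 + q%:R * `|w - 1| ^+ 2.
  rewrite !normCK !rmorphB /= conjC_nat conjC1.
  apply/eqP; rewrite -subr_eq0.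
  have -> : (q%:R - w) * (q%:R - w^*) - ((q%:R - 1) ^+ 2 + q%:R * ((w - 1) * (w^* - 1)))
     = (1 - q%:R) * (w^* * w - 1) by ring.
  by rewrite ww subrr mulr0.
have q1 : 1 <= q%:R - 1 :> algC.
  by rewrite lerBrDr (_ : 1 + 1 = 2%:R) // ler_nat.
have n0 := normr_ge0 (q%:R - w).
rewrite -(@ltr_pXn2r _ 2) ?nnegrE // expr1n key.
case/orP: h => [w1|q3].
  have h1 : 1 <= (q%:R - 1) ^+ 2 :> algC by rewrite exprn_ege1.
  have h2 : 0 < q%:R * `|w - 1| ^+ 2 :> algC.
    rewrite mulr_gt0 // ?ltr0n ?exprn_gt0 ?normr_gt0 ?subr_eq0 //.
    by apply: leq_trans q2.
  by apply: (le_lt_trans h1); rewrite ltrDl.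
have q2' : 1 < q%:R - 1 :> algC.
  by rewrite ltrBrDr (_ : 1 + 1 = 2%:R) // ltr_nat.
have h1 : 1 < (q%:R - 1) ^+ 2 :> algC by rewrite exprn_egt1.
apply: (lt_le_trans h1); rewrite lerDl mulr_ge0 ?ler0n ?exprn_ge0 //.
Qed.

Lemma prod_gt1 (n : nat) (P : pred 'I_n) (F : 'I_n -> algC) (i0 : 'I_n) :
  P i0 -> (forall i, P i -> 1 < F i) -> 1 < \prod_(i | P i) F i.
Proof.
move=> Pi0 H; rewrite (bigD1 i0) //=.
have ge1 : 1 <= \prod_(i | P i && (i != i0)) F i.
  apply: (big_ind (fun x => 1 <= x)) => //; first exact: mulr_ege1.
  by move=> i /andP[Pi _]; apply: ltW; apply: H.
apply: (lt_le_trans (H i0 Pi0)); apply: ler_peMr => //.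
by apply: le_trans (ltW (H i0 Pi0)).
Qed.

Lemma Phi_gt1 (q d : nat) : (2 <= q)%N -> (0 < d)%N -> (3 <= q ^ d)%N ->
  (1 < `|('Phi_d).[q%:Z]|)%R.
Proof.
move=> q2 d0 qd3.
have [z zprim] := C_prim_root_exists d0.
rewrite -(ltr_int algC) intr_norm.
have -> : ((('Phi_d).[q%:Z])%:~R : algC) = (map_poly intr 'Phi_d).[q%:R].
  by rewrite -horner_map /= -natz rmorph_nat.
rewrite (Cintr_Cyclotomic zprim) /cyclotomic horner_prod normr_prod.
have i0lt : ((d != 1)%N < d)%N by case: d d0 {zprim qd3} => [|[|]].
apply: (prod_gt1 (i0 := Ordinal i0lt)).
  by rewrite /=; case: d d0 {zprim qd3 i0lt} => [|[|]] //= n _; rewrite coprime1n.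
move=> i /= ci; rewrite hornerXsubC; apply: factor_gt1 => //.
  rewrite -normCKC; suff -> : `|z ^+ i| = 1 by rewrite expr1n.
  apply/eqP.
  have nw : `|z ^+ i| ^+ d = 1.
    by rewrite -normrX -exprM mulnC exprM (prim_expr_order zprim) expr1n normr1.
  have : (`|z ^+ i| ^+ d == 1) by rewrite nw.
  by rewrite pexprn_eq1 // eqn0Ngt d0.
case: (eqVneq d 1) => [d1|dn1]; first by rewrite orbC; move: qd3; rewrite [in (q ^ d)%N]d1 expn1 => ->.
have d1 : (1 < d)%N by rewrite ltn_neqAle eq_sym dn1 d0.
  rewrite -(prim_order_dvd zprim); apply/orP; left.
  have i0 : (0 < i)%N.
    by case: (nat_of_ord i) ci => //; rewrite /coprime gcd0n => /eqP dd; rewrite dd in d1.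
  by rewrite gtnNdvd.
Qed.

Lemma horner_Xn1 (q n : nat) : (0 < q)%N ->
  (('X^n - 1 : {poly int}).[q%:Z]) = Posz (q ^ n - 1)%N.
Proof.
move=> q0; rewrite hornerD hornerN hornerXn hornerC -subzn ?expn_gt0 ?q0 //.
by rewrite -natz -natrX natz.
Qed.

Lemma zsig (q d : nat) : (2 <= q)%N -> (0 < d)%N -> (3 <= q ^ d)%N ->
  exists2 r, prime r & (r %| q ^ d - 1)%N /\
    (forall g, (g %| d)%N -> (g < d)%N -> (r * (q ^ g - 1) %| q ^ d - 1)%N).
Proof.
move=> q2 d0 qd3.
have q0 : (0 < q)%N by apply: leq_trans q2.
set N := ('Phi_d).[q%:Z].
have N1 : (1 < `|N|)%N.
  by have := Phi_gt1 q2 d0 qd3; rewrite -/N -abszE ltz_nat.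
exists (pdiv `|N|); first exact: pdiv_prime.
have rN := pdiv_dvd `|N|.
split.
  have [B eB] := Phi_dvd d0.
  have := congr1 (fun p => `|p.[q%:Z]|%N) eB; rewrite /= horner_Xn1 // hornerM abszM -/N /= => ->.
  exact: dvdn_mulr.
move=> g gd gltd.
have [B eB] := Phi_split d0 gd gltd.
have := congr1 (fun p => `|p.[q%:Z]|%N) eB.
rewrite /= horner_Xn1 // !hornerM horner_Xn1 // !abszM -/N /= => ->.
by rewrite mulnC dvdn_mul // dvdn_mulr.
Qed.

End NumberTheory.

Lemma dvd_pow_gcd (N q m n : nat) : 0 < q -> N %| q ^ m - 1 -> N %| q ^ n - 1 ->
  N %| q ^ (gcdn m n) - 1.
Proof.
move=> q0; elim/ltn_ind: (m + n) {-2}m {-2}n (erefl (m + n)) => s IH {}m {}n esum.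
wlog le_mn : m n esum / m <= n.
  move=> W hm hn; case: (leqP m n) => [le|lt]; first exact: W.
  rewrite gcdnC; apply: (W n m) => //; [by rewrite addnC | exact: ltnW].
case: m esum le_mn => [|m] esum le_mn hm hn; first by rewrite gcd0n.
have ->: n = m.+1 + (n - m.+1) by rewrite subnKC.
rewrite gcdnDl; apply: (IH _ _ m.+1 (n - m.+1) erefl hm).
  rewrite -esum; lia.
move: hn; have ->: q ^ n - 1 = q ^ (n - m.+1) * (q ^ m.+1 - 1) + (q ^ (n - m.+1) - 1).
  rewrite mulnBr muln1 -expnD subnK // addnBA ?expn_gt0 ?q0 //.
  have h1 : q ^ (n - m.+1) <= q ^ n by rewrite leq_pexp2l // leq_subr.
  have h2 : 0 < q ^ (n - m.+1) by rewrite expn_gt0 q0.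
  move: h1 h2; generalize (q ^ (n - m.+1)) (q ^ n) => a b; lia.
by rewrite dvdn_addr // dvdn_mull.
Qed.


Section Orb.
Local Open Scope group_scope.
Lemma orbit_div (gT : finGroupType) (sT : finType) (to : {action gT &-> sT})
  (H R : {group gT}) (S : {set sT}) r :
  prime r -> r.-Sylow(H) R -> [transitive H, on S | to] ->
  forall v, v \in S -> (r ^ (logn r #|S|) %| #|orbit to R v|)%N.
Proof.
move=> pr sylR trH v Sv.
have sRH := pHall_sub sylR.
have e1 := card_orbit_stab to H v; rewrite (atransP trH v Sv) in e1.
have e2 := card_orbit_stab to R v.
have rR : r.-group 'C_R[v | to] by apply: pgroupS (subsetIl _ _) (pHall_pgroup sylR).
have cRv := card_pgroup rR.
have dv : (r ^ logn r #|'C_R[v | to]| %| #|'C_H[v | to]|)%N.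
  by rewrite -cRv cardSg // setSI.
have le : (logn r #|'C_R[v | to]| <= logn r #|'C_H[v | to]|)%N.
  by rewrite -pfactor_dvdn.
have cR : #|R| = (r ^ logn r #|H|)%N by rewrite (card_Hall sylR) p_part.
have lH : logn r #|H| = (logn r #|S| + logn r #|'C_H[v | to]|)%N.
  rewrite -e1 lognM ?cardG_gt0 //; apply/card_gt0P; by exists v.
move: e2; rewrite cR lH cRv.
set a := logn r #|S|; set l := logn r #|'C_H[v | to]|; set e := logn r #|'C_R[v | to]|.
have -> : (a + l = (a + (l - e)) + e)%N by rewrite -addnA subnK.
rewrite expnD => /eqP; rewrite eqn_pmul2r ?expn_gt0 ?prime_gt0 // => /eqP ->.
by rewrite dvdn_exp2l // leq_addr.
Qed.

End Orb.

Section Lin.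
Import GRing.Theory.
Local Open Scope ring_scope.

Variables (F : finFieldType) (d : nat).
Local Notation V := 'rV[F]_d.

Lemma card_V : #|V| = (#|F| ^ d)%N.
Proof. by rewrite card_mx mul1n. Qed.

Lemma card_F2 : (1 < #|F|)%N.
Proof. by apply/card_gt1P; exists 0, 1; rewrite !inE eq_sym oner_neq0. Qed.

Lemma lin_of_stab (G : {group {perm V}}) g :
  G \subset AGL F d -> g \in G -> g 0 = 0 ->
  exists A : 'M[F]_d, forall x, g x = x *m A.
Proof.
move=> sG Gg g0; have := subsetP sG g Gg; rewrite inE => /existsP[A /existsP[v /andP[_ /forallP H]]].
exists A => x; have := eqP (H 0); rewrite g0 mul0mx add0r => v0.
by rewrite (eqP (H x)) -v0 addr0.
Qed.

Lemma fix_card (A : 'M[F]_d) :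
  exists m, #|[set y : V | y *m A == y]| = (#|F| ^ m)%N.
Proof.
exists (\rank (kermx (A - 1%:M))); rewrite -card_rowg; apply: eq_card => y.
rewrite inE mem_rowg; apply/eqP/sub_kermxP.
  by move=> h; rewrite mulmxBr mulmx1 h subrr.
by move/eqP; rewrite mulmxBr mulmx1 subr_eq0 => /eqP.
Qed.


End Lin.

Local Open Scope group_scope.

Theorem theorem4p1 (F : finFieldType) (d : nat) (G : {group {perm 'rV[F]_d}}) :
  affine_perm_group G ->
  (3 <= #|'rV[F]_d|)%N ->
  [transitive^2 G, on [set: 'rV[F]_d] | 'P] ->
  exists2 g, g \in G & quasi_semiregular g.
Proof.
move=> [sTG sGA] n3 tr2.
set q := #|F|.
have q2 : (1 < q)%N := card_F2 F.
rewrite card_V in n3.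
have d0 : (0 < d)%N by case: d {sTG sGA tr2 G} n3 => //; rewrite expn0.
have [r pr [rn1 rg]] := zsig q2 d0 n3.
set G0 := 'C_G[0%R | 'P].
set S := [set: 'rV[F]_d] :\ 0%R.
have trS : [transitive G0, on S | 'P].
  exact: ntransitive1 (ltn0Sn 0) (stab_ntransitive (ltn0Sn 0) (in_setT 0%R) tr2).
have cS : #|S| = (q ^ d - 1)%N.
  by have := cardsD1 0%R [set: 'rV[F]_d]; rewrite in_setT cardsT card_V add1n => ->; rewrite subn1.
have [R sylR] := Sylow_exists r G0.
have odiv := orbit_div pr sylR trS.
set a := logn r #|S| in odiv.
have Sne : (0 < #|S|)%N by rewrite cS subn_gt0; apply: leq_trans n3.
have ra_S : (r ^ a %| #|S|)%N by rewrite -p_part dvdn_part.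
have a0 : (0 < a)%N by rewrite -(pfactor_dvdn 1) // expn1 cS.
have [v0 Sv0] : exists v, v \in S by apply/card_gt0P.
have rR : (r %| #|R|)%N.
  have := odiv v0 Sv0; rewrite -(card_orbit_stab 'P R v0) => h.
  apply: dvdn_mulr; apply: dvdn_trans h; rewrite -{1}(expn1 r) dvdn_exp2l //.
have pR := pHall_pgroup sylR.
have Zne1 : 'Z(R) != 1.
  apply/eqP => Z1; have R1 := trivg_center_pgroup pR Z1.
  by move: rR; rewrite R1 cards1 dvdn1 => /eqP r1; rewrite r1 in pr.
have [_ rZ _] := pgroup_pdiv (pgroupS (center_sub R) pR) Zne1.
have [x Zx ox] := Cauchy pr rZ.
have Rx : x \in R by apply: (subsetP (center_sub R)).
have G0x : x \in G0 by apply: (subsetP (pHall_sub sylR)).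
have Gx : x \in G by move: G0x; rewrite inE => /andP[].
have x0 : x 0%R = 0%R by move: G0x; rewrite inE => /andP[_ /astab1P].
have [A hA] := lin_of_stab sGA Gx x0.
have G0_0 : forall h, h \in G0 -> h 0%R = 0%R.
  by move=> h; rewrite inE => /andP[_ /astab1P].
have RG0 := pHall_sub sylR.
have key : forall y, x y = y -> y = 0%R.
  move=> y0 xy0; apply/eqP; apply: contraT => y0n.
  set C := [set y : 'rV[F]_d | (y *m A)%R == y].
  have [m cm] := fix_card A.
  set C' := C :\ 0%R.
  have cC' : #|C'| = (q ^ m - 1)%N.
    have := cardsD1 0%R C; rewrite cm inE mul0mx eqxx add1n => ->; by rewrite subn1.
  have actC : [acts R, on C' | 'P].
    apply/actsP => g Rg y /=.
    have g0 : g 0%R = 0%R by apply: G0_0; apply: (subsetP RG0).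
    have cxg : commute x g by case/centerP: Zx => _; apply.
    have xg : x (g y) = g (x y) by rewrite -!permM cxg.
    rewrite !inE -!hA xg (inj_eq perm_inj); congr (_ && _).
    have h : (g y == 0%R) = (y == 0%R) by rewrite -{1}g0 (inj_eq perm_inj).
    exact: (congr1 negb h).
  have dC : (r ^ a %| #|C'|)%N.
    rewrite -(acts_sum_card_orbit actC); apply: dvdn_sum => T /imsetP[v Cv ->].
    apply: odiv; move: Cv; rewrite !inE => /andP[-> _] //.
  have yC' : y0 \in C' by rewrite !inE y0n -hA xy0 eqxx.
  have m0 : (0 < m)%N.
    case: m cm cC' => // _ c; have : (0 < #|C'|)%N by apply/card_gt0P; exists y0.
    by rewrite c expn0 subnn.
  have Cne : C != [set: 'rV[F]_d].
    apply/eqP => CT; have x1 : x = 1.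
      apply/permP => y; rewrite perm1; have : y \in C by rewrite CT in_setT.
      by rewrite inE -hA => /eqP.
    by move: ox; rewrite x1 order1 => r1; rewrite -r1 in pr.
  have md : (m < d)%N.
    have pC : C \proper [set: 'rV[F]_d] by rewrite properT.
    have := proper_card pC; rewrite cm cardsT card_V.
    by rewrite ltn_exp2l.
  have ram : (r ^ a %| q ^ m - 1)%N by rewrite -cC'.
  have ran : (r ^ a %| q ^ d - 1)%N by rewrite -cS.
  have rag := dvd_pow_gcd (ltnW q2) ram ran.
  have gd : (gcdn m d %| d)%N := dvdn_gcdr m d.
  have gltd : (gcdn m d < d)%N := leq_ltn_trans (dvdn_leq m0 (dvdn_gcdl m d)) md.
  have h := rg _ gd gltd.
  have : (r ^ a.+1 %| q ^ d - 1)%N.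
    by rewrite expnS; apply: dvdn_trans h; apply: dvdn_mul.
  by rewrite -cS pfactor_dvdn // ltnn.
have cxG0 : <[x]> \subset G0 by rewrite cycle_subG.
exists x => //; exists 0%R; split.
  move=> y; split => [H|->]; first by apply: key; apply: H; exact: cycle_id.
  by move=> h hx; apply: G0_0; apply: (subsetP cxG0).
move=> y yn h hx hy; apply/eqP; apply: contraT => h1.
have oh : #[h] = r.
  apply/(prime_nt_dvdP pr); first by rewrite order_eq1.
  by rewrite -ox; apply: cardSg; rewrite cycle_subG.
have ex : <[h]> = <[x]>.
  apply/eqP; rewrite eqEcard cycle_subG hx /=; change (#[x] <= #[h])%N; by rewrite oh ox.
have : x \in <[h]> by rewrite ex cycle_id.
case/cycleP => k xk.
by move: yn; rewrite (key y) ?eqxx // xk permX_fix.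
Qed.
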